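(* There exist a common knowledge debate game, a common knowledge distinguishing debate game, and a private information distinguishing debate game each of which has the following property: the minimum error over all policies is strictly less than the minimum error over policies $M$ whose image is contained in $\{0,1\}$.
   Context: Let $\delta$ be a special default action. CKDG: a tuple $(A_1,A_2,S,P,C_1,C_2,u)$ consisting of finite sets $A_i\not\ni\delta$, a finite set $S$, a probability mass function $P$ on $S$, maps $C_i:S\to\mathcal P(A_i)$, and $u:\{1,2\}\times S\to\mathbb R$. A policy is $M:\{1,2\}\times(A_1\cup\{\delta\})\times(A_2\cup\{\delta\})\to[0,1]$ with $M(1,\cdot,\cdot)+M(2,\cdot,\cdot)=1$. $w^i_M(s)$ is the value to agent $i$ of the zero-sum game with payoff matrix $M(i,\cdot,\cdot)$, with agent 1 restricted to $C_1(s)\cup\{\delta\}$ and agent 2 to $C_2(s)\cup\{\delta\}$. The error is $\mathbb E_{s\sim P}[\,|u(1,s)-u(2,s)|w^1_M(s)$ if $u(1,s)\le u(2,s)$, else $|u(1,s)-u(2,s)|w^2_M(s)\,]$. CKDDG: a tuple $(A,S,P,C_w,C_l)$ with $A$ finite, $\delta\notin A$, $S$ finite, $P$ a probability mass function on $S$, and $C_w,C_l:S\to\mathcal P(A)$. Policies and error are those of the induced CKDG $(A,A,\{1,2\}\times S,P',C'_1,C'_2,u')$, where: - $P'((i,s))=P(s)/2$; - $C'_j((i,s))=C_w(s)$ if $i=j$, else $C_l(s)$; - $u'(j,(i,s))=[i=j]$. PIDDG: a tuple of the same form as a CKDDG. A policy is $M:\{1,2\}\times(A\cup\{\delta\})^2\to[0,1]$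 with $M(1,\cdot,\cdot)+M(2,\cdot,\cdot)=1$. $G_1(B,M)$ is the following Bayesian game. Each agent has action set $A\cup\{\delta\}$. A scenario $s\sim P$ is drawn, and agent 1's type (set of available non-default actions) is $C_w(s)$ while agent 2's is $C_l(s)$. Payoffs are as follows: - if both agents play available actions, agent $i$ gets $M(i,a_1,a_2)$; - if exactly one plays an unavailable action, it gets $0$ and the other gets $1$; - if both play unavailable actions, each gets $1/2$. $G_2(B,M)$ swaps the types. The PIDDG error is $\frac{v_1(G_2(B,M))+v_2(G_1(B,M))}{2}$, where $v_i$ is the value of the zero-sum Bayesian game to agent $i$. Minimum errors over the relevant (compact) policy sets exist. *)

(* Defs.v *)
From HB Require Import structures.
From mathcomp Require Import all_boot all_order all_algebra.
From mathcomp Require Import boolp classical_sets reals.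
Set Implicit Arguments.
Unset Strict Implicit.
Unset Printing Implicit Defensive.
Import Order.TTheory GRing.Theory Num.Theory.
Local Open Scope ring_scope.
Local Open Scope classical_set_scope.

Definition ag1 : 'I_2 := ord0.
Definition ag2 : 'I_2 := ord_max.

(* The default action delta is modelled by [None : option A]. *)
Definition avail (A : finType) (X : {set A}) (a : option A) : bool :=
  if a is Some x then x \in X else true.

Section Defs.
Variable R : realType.

Definition mixed (T : finType) (X : pred T) (x : T -> R) : Prop :=
  (forall t, 0 <= x t) /\ \sum_(t : T) x t = 1 /\ (forall t, ~~ X t -> x t = 0).

Definition payoff (T1 T2 : finType) (f : T1 -> T2 -> R) (x : T1 -> R) (y : T2 -> R) : R :=
  \sum_(a : T1) \sum_(b : T2) x a * y b * f a b.

Definition value1 (T1 T2 : finType) (f : T1 -> T2 -> R) (X : pred T1) (Y : pred T2) : R :=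
  sup [set v | exists x, mixed X x /\
        v = inf [set w | exists y, mixed Y y /\ w = payoff f x y]].

Definition value2 (T1 T2 : finType) (g : T1 -> T2 -> R) (X : pred T1) (Y : pred T2) : R :=
  sup [set v | exists y, mixed Y y /\
        v = inf [set w | exists x, mixed X x /\ w = payoff g x y]].

Definition is_policy (A1 A2 : finType) (M : 'I_2 -> option A1 -> option A2 -> R) : Prop :=
  (forall i a b, 0 <= M i a b <= 1) /\ (forall a b, M ag1 a b + M ag2 a b = 1).

Definition is_det_policy (A1 A2 : finType) (M : 'I_2 -> option A1 -> option A2 -> R) : Prop :=
  is_policy M /\ (forall i a b, M i a b = 0 \/ M i a b = 1).

Definition randomization_helps (A1 A2 : finType)
    (err : ('I_2 -> option A1 -> option A2 -> R) -> R) : Prop :=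
  exists M, is_policy M /\ forall M', is_det_policy M' -> err M < err M'.

Definition is_pmf (S : finType) (P : S -> R) : Prop :=
  (forall s, 0 <= P s) /\ \sum_(s : S) P s = 1.

Unset Implicit Arguments.
Record CKDG := mkCKDG {
  ck_A1 : finType; ck_A2 : finType; ck_S : finType;
  ck_P : ck_S -> R;
  ck_C1 : ck_S -> {set ck_A1};
  ck_C2 : ck_S -> {set ck_A2};
  ck_u : 'I_2 -> ck_S -> R }.

Set Implicit Arguments.
Definition ckdg_wf (G : CKDG) : Prop := is_pmf (ck_P G).

Definition ck_w (G : CKDG) (M : 'I_2 -> option (ck_A1 G) -> option (ck_A2 G) -> R)
    (i : 'I_2) (s : ck_S G) : R :=
  let X := avail (ck_C1 G s) in
  let Y := avail (ck_C2 G s) in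
  if i == ag1 then value1 (M ag1) X Y else value2 (M ag2) X Y.

Definition ckdg_error (G : CKDG) (M : 'I_2 -> option (ck_A1 G) -> option (ck_A2 G) -> R) : R :=
  \sum_(s : ck_S G) ck_P G s *
    (if ck_u G ag1 s <= ck_u G ag2 s
     then `|ck_u G ag1 s - ck_u G ag2 s| * ck_w M ag1 s
     else `|ck_u G ag1 s - ck_u G ag2 s| * ck_w M ag2 s).

Unset Implicit Arguments.
Record DDG := mkDDG {
  dd_A : finType; dd_S : finType;
  dd_P : dd_S -> R;
  dd_Cw : dd_S -> {set dd_A};
  dd_Cl : dd_S -> {set dd_A} }.

Set Implicit Arguments.
Definition ddg_wf (G : DDG) : Prop := is_pmf (dd_P G).

Definition induced_ckdg (G : DDG) : CKDG :=
  {| ck_A1 := dd_A G; ck_A2 := dd_A G;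
     ck_S := ('I_2 * dd_S G)%type;
     ck_P := fun p => dd_P G p.2 / 2;
     ck_C1 := fun p => if p.1 == ag1 then dd_Cw G p.2 else dd_Cl G p.2;
     ck_C2 := fun p => if p.1 == ag2 then dd_Cw G p.2 else dd_Cl G p.2;
     ck_u := fun j p => if p.1 == j then 1 else 0 |}.

Definition ckddg_error (G : DDG) (M : 'I_2 -> option (dd_A G) -> option (dd_A G) -> R) : R :=
  ckdg_error (G := induced_ckdg G) M.

(* Payoff to agent i in the Bayesian game when agent 1 has type T1 and
   agent 2 has type T2 and they play a1, a2. *)
Definition bpay (A : finType) (M : 'I_2 -> option A -> option A -> R) (i : 'I_2)
    (T1 T2 : {set A}) (a1 a2 : option A) : R :=
  match avail T1 a1, avail T2 a2 with
  | true, true => M i a1 a2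
  | true, false => if i == ag1 then 1 else 0
  | false, true => if i == ag1 then 0 else 1
  | false, false => 1 / 2
  end.

(* Behavioural strategies: a mixed action (over all of A + delta) for each type. *)
Definition bstrat (A : finType) (sigma : {set A} -> option A -> R) : Prop :=
  forall T, mixed predT (sigma T).

Definition bexp (G : DDG) (M : 'I_2 -> option (dd_A G) -> option (dd_A G) -> R) (i : 'I_2)
    (t1 t2 : dd_S G -> {set dd_A G}) (s1 s2 : {set dd_A G} -> option (dd_A G) -> R) : R :=
  \sum_(s : dd_S G) dd_P G s *
    \sum_(a : option (dd_A G)) \sum_(b : option (dd_A G))
      s1 (t1 s) a * s2 (t2 s) b * bpay M i (t1 s) (t2 s) a b.

Definition bvalue1 (G : DDG) (M : 'I_2 -> option (dd_A G) -> option (dd_A G) -> R)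
    (t1 t2 : dd_S G -> {set dd_A G}) : R :=
  sup [set v | exists s1, bstrat s1 /\
        v = inf [set w | exists s2, bstrat s2 /\ w = bexp M ag1 t1 t2 s1 s2]].

Definition bvalue2 (G : DDG) (M : 'I_2 -> option (dd_A G) -> option (dd_A G) -> R)
    (t1 t2 : dd_S G -> {set dd_A G}) : R :=
  sup [set v | exists s2, bstrat s2 /\
        v = inf [set w | exists s1, bstrat s1 /\ w = bexp M ag2 t1 t2 s1 s2]].

(* G_1(B,M): agent 1 has type C_w(s), agent 2 has type C_l(s); G_2 swaps. *)
Definition piddg_error (G : DDG) (M : 'I_2 -> option (dd_A G) -> option (dd_A G) -> R) : R :=
  (bvalue1 M (dd_Cl G) (dd_Cw G) + bvalue2 M (dd_Cw G) (dd_Cl G)) / 2.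

End Defs.

(* Main.v *)
Require Import Defs.
From HB Require Import structures.
From mathcomp Require Import all_boot all_order all_algebra.
From mathcomp Require Import boolp classical_sets reals.
From mathcomp Require Import lra.
Set Implicit Arguments.
Unset Strict Implicit.
Unset Printing Implicit Defensive.
Import Order.TTheory GRing.Theory Num.Theory.
Local Open Scope ring_scope.
Local Open Scope classical_set_scope.

Definition mm (R : realType) (X Y : Type) (Sx : X -> Prop) (Sy : Y -> Prop)
  (F : X -> Y -> R) : R :=
  sup [set v | exists x, Sx x /\ v = inf [set w | exists y, Sy y /\ w = F x y]].

Lemma mm_inf_bounds (R : realType) (X Y : Type) (Sx : X -> Prop) (Sy : Y -> Prop)
  (F : X -> Y -> R) x :
  (exists y, Sy y) -> (forall x y, Sx x -> Sy y -> 0 <= F x y <= 1) -> Sx x ->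
  0 <= inf [set w | exists y, Sy y /\ w = F x y] <= 1.
Proof.
move=> [y0 Hy0] Hb Hx; apply/andP; split.
  apply: lb_le_inf; first by exists (F x y0); exists y0.
  by move=> w [y [Hy ->]]; have /andP[] := Hb x y Hx Hy.
have Hl : has_lbound [set w | exists y, Sy y /\ w = F x y].
  by exists 0 => w [y [Hy ->]]; have /andP[] := Hb x y Hx Hy.
have Hin : [set w | exists y, Sy y /\ w = F x y] (F x y0) by exists y0.
apply: le_trans (ge_inf Hl Hin) _.
by have /andP[] := Hb x y0 Hx Hy0.
Qed.

Lemma mm_ge (R : realType) (X Y : Type) (Sx : X -> Prop) (Sy : Y -> Prop)
  (F : X -> Y -> R) x0 (t : R) :
  Sx x0 -> (exists y, Sy y) -> (forall x y, Sx x -> Sy y -> 0 <= F x y <= 1) ->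
  (forall y, Sy y -> t <= F x0 y) -> t <= mm Sx Sy F.
Proof.
move=> Hx0 [y0 Hy0] Hb Ht.
have Hub : has_ubound [set v | exists x, Sx x /\ v = inf [set w | exists y, Sy y /\ w = F x y]].
  exists 1 => v [x [Hx ->]].
  by have /andP[] := mm_inf_bounds (ex_intro _ y0 Hy0) Hb Hx.
have Hin : [set v | exists x, Sx x /\ v = inf [set w | exists y, Sy y /\ w = F x y]]
   (inf [set w | exists y, Sy y /\ w = F x0 y]) by exists x0.
apply: le_trans (ub_le_sup Hub Hin).
apply: lb_le_inf; first by exists (F x0 y0); exists y0.
by move=> w [y [Hy ->]]; apply: Ht.
Qed.

Lemma mm_le (R : realType) (X Y : Type) (Sx : X -> Prop) (Sy : Y -> Prop)
  (F : X -> Y -> R) y0 (t : R) :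
  (exists x, Sx x) -> Sy y0 -> (forall x y, Sx x -> Sy y -> 0 <= F x y <= 1) ->
  (forall x, Sx x -> F x y0 <= t) -> mm Sx Sy F <= t.
Proof.
move=> [x0 Hx0] Hy0 Hb Ht.
apply: ge_sup; first by exists (inf [set w | exists y, Sy y /\ w = F x0 y]); exists x0.
move=> v [x [Hx ->]].
have Hl : has_lbound [set w | exists y, Sy y /\ w = F x y].
  by exists 0 => w [y [Hy ->]]; have /andP[] := Hb x y Hx Hy.
have Hin : [set w | exists y, Sy y /\ w = F x y] (F x y0) by exists y0.
exact: le_trans (ge_inf Hl Hin) (Ht x Hx).
Qed.

Lemma avg_ge (R : realType) (T : finType) (X : pred T) (z h : T -> R) (t : R) :
  mixed X z -> (forall k, X k -> t <= h k) -> t <= \sum_k z k * h k.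
Proof.
move=> [z0 [z1 zX]] H.
have -> : t = \sum_k z k * t by rewrite -mulr_suml z1 mul1r.
apply: ler_sum => k _; case Xk: (X k).
  by apply: ler_wpM2l => //; apply: H.
by rewrite zX ?Xk // !mul0r.
Qed.

Lemma avg_le (R : realType) (T : finType) (X : pred T) (z h : T -> R) (t : R) :
  mixed X z -> (forall k, X k -> h k <= t) -> \sum_k z k * h k <= t.
Proof.
move=> [z0 [z1 zX]] H.
have -> : t = \sum_k z k * t by rewrite -mulr_suml z1 mul1r.
apply: ler_sum => k _; case Xk: (X k).
  by apply: ler_wpM2l => //; apply: H.
by rewrite zX ?Xk // !mul0r.
Qed.

Lemma payoffE1 (R : realType) (T1 T2 : finType) (f : T1 -> T2 -> R) x y :
  payoff f x y = \sum_b y b * (\sum_a x a * f a b).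
Proof.
rewrite /payoff exchange_big; apply: eq_bigr => b _; rewrite mulr_sumr.
by apply: eq_bigr => a _; rewrite mulrCA mulrA.
Qed.

Lemma payoffE2 (R : realType) (T1 T2 : finType) (f : T1 -> T2 -> R) x y :
  payoff f x y = \sum_a x a * (\sum_b y b * f a b).
Proof.
rewrite /payoff; apply: eq_bigr => a _; rewrite mulr_sumr.
by apply: eq_bigr => b _; rewrite mulrA.
Qed.

Lemma payoff01 (R : realType) (T1 T2 : finType) (f : T1 -> T2 -> R) X Y x y :
  (forall a b, 0 <= f a b <= 1) -> mixed X x -> mixed Y y -> 0 <= payoff f x y <= 1.
Proof.
move=> Hf Hx Hy; rewrite payoffE2; apply/andP; split.
  apply: (avg_ge Hx) => a _; apply: (avg_ge Hy) => b _; by have /andP[] := Hf a b.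
apply: (avg_le Hx) => a _; apply: (avg_le Hy) => b _; by have /andP[] := Hf a b.
Qed.

Definition wmix (R : realType) (T : finType) (p : R) (a1 a2 : T) : T -> R :=
  fun t => p * (t == a1)%:R + (1 - p) * (t == a2)%:R.

Lemma sum_dirac (R : realType) (T : finType) (a : T) (h : T -> R) :
  \sum_t (t == a)%:R * h t = h a.
Proof.
rewrite (bigD1 a) //= eqxx mul1r big1 ?addr0 // => t /negbTE ->; by rewrite mul0r.
Qed.

Lemma wmix_sum (R : realType) (T : finType) (p : R) (a1 a2 : T) (h : T -> R) :
  \sum_t wmix p a1 a2 t * h t = p * h a1 + (1 - p) * h a2.
Proof.
rewrite /wmix.
under eq_bigr => t _ do rewrite mulrDl -!mulrA.
by rewrite big_split /= -!mulr_sumr !sum_dirac.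
Qed.

Lemma wmix_mixed (R : realType) (T : finType) (X : pred T) (p : R) (a1 a2 : T) :
  0 <= p <= 1 -> X a1 -> X a2 -> mixed X (wmix p a1 a2).
Proof.
move=> /andP[p0 p1] X1 X2; split; last split.
- move=> t; rewrite /wmix; apply: addr_ge0; apply: mulr_ge0 => //; rewrite ?subr_ge0 //.
- have := wmix_sum p a1 a2 (fun _ => 1); under eq_bigr => t _ do rewrite mulr1.
  by move=> ->; rewrite !mulr1 addrC subrK.
- move=> t Xt; rewrite /wmix.
  have -> : (t == a1) = false by apply/negP => /eqP E; move: Xt; rewrite E X1.
  have -> : (t == a2) = false by apply/negP => /eqP E; move: Xt; rewrite E X2.
  by rewrite !mulr0 addr0.
Qed.

Definition colmin (T : Type) (B : T -> T -> bool) (a1 a2 : T) (cs : seq T) : nat :=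
  foldr (fun c m => minn (B a1 c + B a2 c) m) 2%N cs.
Definition Kval (T : Type) (B : T -> T -> bool) (rs cs : seq T) : nat :=
  foldr maxn 0%N [seq colmin B p.1 p.2 cs | p <- [seq (a1, a2) | a1 <- rs, a2 <- rs]].

Lemma colmin_le (T : eqType) (B : T -> T -> bool) a1 a2 cs c :
  c \in cs -> (colmin B a1 a2 cs <= B a1 c + B a2 c)%N.
Proof.
elim: cs => //= c' cs IH; rewrite inE => /orP[/eqP ->|/IH H]; first exact: geq_minl.
exact: leq_trans (geq_minr _ _) H.
Qed.

Lemma foldr_maxn_mem (s : seq nat) : s != [::] -> foldr maxn 0%N s \in s.
Proof.
elim: s => //= n s IH _; case: s IH => [|m s] IH; first by rewrite maxn0 inE.
have := IH isT; set k := foldr maxn 0%N _ => Hk.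
rewrite /maxn; case: ltnP => _; first by rewrite inE Hk orbT.
by rewrite inE eqxx.
Qed.

Lemma Kval_mem (T : eqType) (B : T -> T -> bool) rs cs : rs != [::] ->
  exists a1 a2, [/\ a1 \in rs, a2 \in rs & Kval B rs cs = colmin B a1 a2 cs].
Proof.
move=> Hrs.
have Hne : [seq colmin B p.1 p.2 cs | p <- [seq (a1, a2) | a1 <- rs, a2 <- rs]] != [::].
  by case: rs Hrs.
have /mapP[[a1 a2] /allpairsP[[b1 b2] /= [H1 H2 [-> ->]]] E] := foldr_maxn_mem Hne.
by exists b1, b2; split.
Qed.

Lemma K_strat (R : realType) (T : finType) (X Y : pred T) (f : T -> T -> R)
  (B : T -> T -> bool) rs cs :
  (forall a c, f a c = (B a c)%:R) -> (forall c, Y c -> c \in cs) -> all X rs ->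
  rs != [::] ->
  exists x, mixed X x /\ forall c, Y c -> (Kval B rs cs)%:R / 2 <= \sum_a x a * f a c.
Proof.
move=> Hf HY HX Hrs; have [a1 [a2 [H1 H2 E]]] := Kval_mem B cs Hrs.
exists (wmix (1/2) a1 a2); split.
  apply: wmix_mixed; [by apply/andP; split; lra | exact: (allP HX) | exact: (allP HX)].
move=> c Yc; rewrite wmix_sum !Hf E.
have : ((colmin B a1 a2 cs)%:R <= (B a1 c)%:R + (B a2 c)%:R :> R).
  by rewrite -natrD ler_nat; apply: colmin_le; apply: HY.
lra.
Qed.

Lemma bool01 (R : realType) (b : bool) : 0 <= (b%:R : R) <= 1.
Proof. by case: b => /=; rewrite ?lexx ?ler01. Qed.

Lemma value1_K (R : realType) (T : finType) (X Y : pred T) (f : T -> T -> R)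
  (B : T -> T -> bool) rs cs c0 :
  (forall a c, f a c = (B a c)%:R) -> Y c0 -> (forall c, Y c -> c \in cs) -> all X rs ->
  rs != [::] -> (Kval B rs cs)%:R / 2 <= value1 f X Y.
Proof.
move=> Hf Y0 HY HX Hrs; have [x [Hx Hc]] := K_strat Hf HY HX Hrs.
apply: (@mm_ge R _ _ (mixed X) (mixed Y) (payoff f) x) => //.
- exists (wmix 1 c0 c0); apply: wmix_mixed => //; by rewrite ler01 lexx.
- move=> x' y' Hx' Hy'; apply: payoff01 Hx' Hy' => a b; rewrite Hf; exact: bool01.
- move=> y Hy; rewrite payoffE1; exact: (avg_ge Hy).
Qed.

Lemma value2_K (R : realType) (T : finType) (X Y : pred T) (g : T -> T -> R)
  (B : T -> T -> bool) rs cs a0 :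
  (forall a b, g a b = (B b a)%:R) -> X a0 -> (forall a, X a -> a \in cs) -> all Y rs ->
  rs != [::] -> (Kval B rs cs)%:R / 2 <= value2 g X Y.
Proof.
move=> Hg X0 HX HY Hrs.
have [y [Hy Hc]] := @K_strat R T Y X (fun b a => g a b) B rs cs (fun b a => Hg a b) HX HY Hrs.
apply: (@mm_ge R _ _ (mixed Y) (mixed X) (fun y x => payoff g x y) y) => //.
- exists (wmix 1 a0 a0); apply: wmix_mixed => //; by rewrite ler01 lexx.
- move=> y' x' Hy' Hx'; apply: payoff01 Hx' Hy' => a b; rewrite Hg; exact: bool01.
- move=> x Hx; rewrite payoffE2; exact: (avg_ge Hx).
Qed.

Lemma value1_le (R : realType) (T1 T2 : finType) (X : pred T1) (Y : pred T2)
  (f : T1 -> T2 -> R) y a0 t :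
  (forall a b, 0 <= f a b <= 1) -> mixed Y y -> X a0 ->
  (forall a, X a -> \sum_b y b * f a b <= t) -> value1 f X Y <= t.
Proof.
move=> Hf Hy X0 Ht.
apply: (@mm_le R _ _ (mixed X) (mixed Y) (payoff f) y) => //.
- exists (wmix 1 a0 a0); apply: wmix_mixed => //; by rewrite ler01 lexx.
- move=> x' y' Hx' Hy'; exact: payoff01 Hx' Hy'.
- move=> x Hx; rewrite payoffE2; exact: (avg_le Hx).
Qed.

Lemma value2_le (R : realType) (T1 T2 : finType) (X : pred T1) (Y : pred T2)
  (g : T1 -> T2 -> R) x b0 t :
  (forall a b, 0 <= g a b <= 1) -> mixed X x -> Y b0 ->
  (forall b, Y b -> \sum_a x a * g a b <= t) -> value2 g X Y <= t.
Proof.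
move=> Hg Hx Y0 Ht.
apply: (@mm_le R _ _ (mixed Y) (mixed X) (fun y x => payoff g x y) x) => //.
- exists (wmix 1 b0 b0); apply: wmix_mixed => //; by rewrite ler01 lexx.
- move=> y' x' Hy' Hx'; exact: payoff01 Hx' Hy'.
- move=> y Hy; rewrite payoffE1; exact: (avg_le Hy).
Qed.

Definition rowsA : seq (option bool) := [:: None; Some true; Some false].
Definition rowsD : seq (option bool) := [:: None].
Definition rowsa : seq (option bool) := [:: None; Some true].
Definition rowsb : seq (option bool) := [:: None; Some false].

Definition Ksum (B : option bool -> option bool -> bool) : nat :=
  let Bt := fun b a => ~~ B a b in
  (2 * Kval Bt rowsA rowsD + 2 * Kval B rowsA rowsD
   + Kval Bt rowsb rowsa + Kval B rowsb rowsa
   + 2 * Kval Bt rowsa rowsA + 2 * Kval B rowsa rowsA)%N.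

Lemma Ksum_ge (B : option bool -> option bool -> bool) : (10 <= Ksum B)%N.
Proof.
rewrite /Ksum /Kval /colmin /rowsA /rowsD /rowsa /rowsb /=.
move: (B None None) (B None (Some true)) (B None (Some false))
  (B (Some true) None) (B (Some true) (Some true)) (B (Some true) (Some false))
  (B (Some false) None) (B (Some false) (Some true)) (B (Some false) (Some false)).
by do 9! case.
Qed.

Lemma sum_opt (R : realType) (F : option bool -> R) :
  \sum_r F r = F None + F (Some true) + F (Some false).
Proof.
rewrite (perm_big [:: None; Some true; Some false]) /=; last first.
  apply: uniq_perm.
  - exact: index_enum_uniq.
  - by [].
  - by case=> [[]|]; rewrite mem_index_enum.
by rewrite !big_cons big_nil addr0 addrA.
Qed.

Lemma sum_I2 (R : realType) (F : 'I_2 -> R) : \sum_r F r = F ag1 + F ag2.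
Proof. rewrite big_ord_recr big_ord1 /=; congr (F _ + F _); exact: val_inj. Qed.

Lemma ag12 : (ag1 == ag2) = false. Proof. by []. Qed.
Lemma ag21 : (ag2 == ag1) = false. Proof. by []. Qed.

Lemma ckddg_errorE (R : realType) (G : DDG R) M :
  @ckddg_error R G M = \sum_s dd_P R G s / 2 *
    (value2 (M ag2) (avail (dd_Cw R G s)) (avail (dd_Cl R G s)) +
     value1 (M ag1) (avail (dd_Cl R G s)) (avail (dd_Cw R G s))).
Proof.
have E (F : ('I_2 * dd_S R G)%type -> R) : \sum_p F p = \sum_i \sum_s F (i, s).
  by rewrite pair_bigA; apply: eq_bigr => -[].
rewrite /ckddg_error /ckdg_error /= E sum_I2 -big_split /=.
apply: eq_bigr => s _.
rewrite /ck_w /= ler10 ler01 subr0 sub0r normrN normr1 !mul1r.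
by rewrite -mulrDr.
Qed.
Local Close Scope classical_set_scope.
Local Open Scope set_scope.
Local Open Scope ring_scope.

Definition Pg (R : realType) (s : option bool) : R :=
  match s with None => 2/5 | Some true => 1/5 | Some false => 2/5 end.
Definition Cwg (s : option bool) : {set bool} :=
  match s with None => finset.set0 | Some true => [set true] | Some false => [set: bool] end.
Definition Clg (s : option bool) : {set bool} :=
  match s with None => [set: bool] | Some true => [set false] | Some false => [set true] end.
Definition Gd (R : realType) : DDG R := @mkDDG R bool (option bool) (@Pg R) Cwg Clg.

Definition mr (R : realType) (r c : option bool) : R :=
  match r, c with
  | Some true, None => 1/2
  | Some true, Some false => 1/2
  | Some false, Some true => 1
  | _, _ => 0
  end.
Definition Mr (R : realType) (i : 'I_2) (r c : option bool) : R :=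
  if i == ag1 then mr R r c else 1 - mr R r c.

Lemma mr01 (R : realType) r c : 0 <= mr R r c <= 1.
Proof. by case: r => [[]|]; case: c => [[]|] /=; apply/andP; split; lra. Qed.

Lemma Mr01 (R : realType) i r c : 0 <= Mr R i r c <= 1.
Proof.
rewrite /Mr; have /andP[h1 h2] := mr01 R r c; case: (i == ag1); apply/andP; split; lra.
Qed.

Lemma Mr_policy (R : realType) : is_policy (Mr R).
Proof.
split; first exact: Mr01.
by move=> a b; rewrite /Mr eqxx ag21 addrC subrK.
Qed.

Lemma Gd_wf (R : realType) : ddg_wf (Gd R).
Proof.
split; first by case=> [[]|] /=; lra.
rewrite sum_opt /=; lra.
Qed.

Lemma Mr_A1 (R : realType) : value2 (Mr R ag2) (avail finset.set0) (avail [set: bool]) <= 1.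
Proof.
  apply: (value2_le (x := wmix 1 None None) (b0 := None) (Mr01 R _)) => //.
    by apply: wmix_mixed; rewrite ?ler01 ?lexx.
  move=> b _; rewrite wmix_sum; have /andP[_ h] := Mr01 R ag2 None b; lra.
Qed.

Lemma Mr_A2 (R : realType) : value1 (Mr R ag1) (avail [set: bool]) (avail finset.set0) <= 1/2.
Proof.
  apply: (value1_le (y := wmix 1 None None) (a0 := None) (Mr01 R _)) => //.
    by apply: wmix_mixed; rewrite ?ler01 ?lexx.
  move=> a _; rewrite wmix_sum /Mr /=; case: a => [[]|] /=; lra.
Qed.

Lemma Mr_B1 (R : realType) : value2 (Mr R ag2) (avail [set true]) (avail [set false]) <= 1/2.
Proof.
  apply: (value2_le (x := wmix 1 (Some true) (Some true)) (b0 := None) (Mr01 R _)) => //.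
    by apply: wmix_mixed; rewrite /= ?inE ?ler01 ?lexx.
  move=> b; rewrite wmix_sum /Mr ag21 /=; case: b => [[]|] //=; rewrite ?inE //= => _; lra.
Qed.

Lemma Mr_B2 (R : realType) : value1 (Mr R ag1) (avail [set false]) (avail [set true]) <= 0.
Proof.
  apply: (value1_le (y := wmix 1 None None) (a0 := None) (Mr01 R _)) => //.
    by apply: wmix_mixed; rewrite ?ler01 ?lexx.
  move=> a; rewrite wmix_sum /Mr /=; case: a => [[]|] //=; rewrite ?inE //= => _; lra.
Qed.

Lemma Mr_C1 (R : realType) : value2 (Mr R ag2) (avail [set: bool]) (avail [set true]) <= 2/3.
Proof.
  apply: (value2_le (x := wmix (2/3) (Some true) (Some false)) (b0 := None) (Mr01 R _)) => //.
    by apply: wmix_mixed; rewrite /= ?inE //; apply/andP; split; lra.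
  move=> b; rewrite wmix_sum /Mr ag21 /=; case: b => [[]|] //=; rewrite ?inE //= => _; lra.
Qed.

Lemma Mr_C2 (R : realType) : value1 (Mr R ag1) (avail [set true]) (avail [set: bool]) <= 0.
Proof.
  apply: (value1_le (y := wmix 1 (Some true) (Some true)) (a0 := None) (Mr01 R _)) => //.
    by apply: wmix_mixed; rewrite /= ?inE ?ler01 ?lexx.
  move=> a; rewrite wmix_sum /Mr /=; case: a => [[]|] //=; rewrite ?inE //= => _; lra.
Qed.

Lemma Mr_err (R : realType) : @ckddg_error R (Gd R) (Mr R) <= 29/60.
Proof.
rewrite ckddg_errorE sum_opt /=.
move: (Mr_A1 R) (Mr_A2 R) (Mr_B1 R) (Mr_B2 R) (Mr_C1 R) (Mr_C2 R).
move: (value2 _ _ _) (value1 _ _ _) (value2 _ _ _) (value1 _ _ _) (value2 _ _ _) (value1 _ _ _).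
move=> *; lra.
Qed.

Lemma det_bits (R : realType) (A : finType) (M : 'I_2 -> option A -> option A -> R) :
  is_det_policy M ->
  (forall r c, M ag1 r c = (M ag1 r c == 1)%:R) /\
  (forall r c, M ag2 r c = (~~ (M ag1 r c == 1))%:R).
Proof.
move=> [[_ Hs] H01].
have z1 : (0 == 1 :> R) = false by apply/negbTE; rewrite eq_sym oner_neq0.
split => r c.
  by case: (H01 ag1 r c) => ->; rewrite ?eqxx ?z1.
have -> : M ag2 r c = 1 - M ag1 r c by rewrite -(Hs r c) addrC addKr.
by case: (H01 ag1 r c) => ->; rewrite ?eqxx ?z1 /= ?subrr ?subr0.
Qed.

Lemma det_err (R : realType) (M : 'I_2 -> option bool -> option bool -> R) :
  is_det_policy M -> 1/2 <= @ckddg_error R (Gd R) M.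
Proof.
move=> Hd; have [H1 H2] := det_bits Hd.
set Bm := fun r c => M ag1 r c == 1.
have H2' : forall a b, M ag2 a b = ((fun b a => ~~ Bm a b) b a)%:R by [].
rewrite ckddg_errorE sum_opt /=.
have A1 := @value2_K R _ (avail finset.set0) (avail [set: bool]) (M ag2) _ rowsA rowsD None H2'
   isT (ltac:(by case=> [[]|]; rewrite /rowsA /rowsD /rowsa /rowsb /= ?inE)) (ltac:(by rewrite /= !inE)) isT.
have A2 := @value1_K R _ (avail [set: bool]) (avail finset.set0) (M ag1) Bm rowsA rowsD None H1
   isT (ltac:(by case=> [[]|]; rewrite /rowsA /rowsD /rowsa /rowsb /= ?inE)) (ltac:(by rewrite /= !inE)) isT.
have B1 := @value2_K R _ (avail [set true]) (avail [set false]) (M ag2) _ rowsb rowsa None H2'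
   isT (ltac:(by case=> [[]|]; rewrite /rowsA /rowsD /rowsa /rowsb /= ?inE)) (ltac:(by rewrite /= !inE)) isT.
have B2 := @value1_K R _ (avail [set false]) (avail [set true]) (M ag1) Bm rowsb rowsa None H1
   isT (ltac:(by case=> [[]|]; rewrite /rowsA /rowsD /rowsa /rowsb /= ?inE)) (ltac:(by rewrite /= !inE)) isT.
have C1 := @value2_K R _ (avail [set: bool]) (avail [set true]) (M ag2) _ rowsa rowsA None H2'
   isT (ltac:(by case=> [[]|]; rewrite /rowsA /rowsD /rowsa /rowsb /= ?inE)) (ltac:(by rewrite /= !inE)) isT.
have C2 := @value1_K R _ (avail [set true]) (avail [set: bool]) (M ag1) Bm rowsa rowsA None H1
   isT (ltac:(by case=> [[]|]; rewrite /rowsA /rowsD /rowsa /rowsb /= ?inE)) (ltac:(by rewrite /= !inE)) isT.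
have K := Ksum_ge Bm; rewrite /Ksum -(ler_nat R) !natrD in K.
move: A1 A2 B1 B2 C1 C2 K.
move: (value2 _ _ _) (value1 _ _ _) (value2 _ _ _) (value1 _ _ _) (value2 _ _ _) (value1 _ _ _).
move: ((Kval _ _ _)%:R : R) ((Kval _ _ _)%:R : R) ((Kval _ _ _)%:R : R).
move: ((Kval _ _ _)%:R : R) ((Kval _ _ _)%:R : R) ((Kval _ _ _)%:R : R).
move=> *; lra.
Qed.

Lemma bpay01 (R : realType) (A : finType) (M : 'I_2 -> option A -> option A -> R) i T1 T2 a b :
  (forall i a b, 0 <= M i a b <= 1) -> 0 <= bpay M i T1 T2 a b <= 1.
Proof.
move=> HM; rewrite /bpay; case: (avail T1 a); case: (avail T2 b); try exact: HM;
  case: (i == ag1); apply/andP; split; lra.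
Qed.

Lemma bexp01 (R : realType) (G : DDG R) M i t1 t2 s1 s2 :
  ddg_wf G -> (forall i a b, 0 <= M i a b <= 1) -> bstrat s1 -> bstrat s2 ->
  0 <= @bexp R G M i t1 t2 s1 s2 <= 1.
Proof.
move=> [P0 P1] HM H1 H2; rewrite /bexp.
have Hp s : 0 <= payoff (bpay M i (t1 s) (t2 s)) (s1 (t1 s)) (s2 (t2 s)) <= 1.
  apply: payoff01 (H1 (t1 s)) (H2 (t2 s)) => a b; exact: bpay01.
apply/andP; split.
  apply: sumr_ge0 => s _; apply: mulr_ge0 => //; by have /andP[] := Hp s.
rewrite -P1; apply: ler_sum => s _; rewrite -[leRHS]mulr1; apply: ler_wpM2l => //.
by have /andP[] := Hp s.
Qed.

Lemma bexp_payoff (R : realType) (G : DDG R) M i t1 t2 s1 s2 :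
  @bexp R G M i t1 t2 s1 s2 =
  \sum_s dd_P R G s * payoff (bpay M i (t1 s) (t2 s)) (s1 (t1 s)) (s2 (t2 s)).
Proof. by []. Qed.

Definition bs0 (R : realType) (A : finType) : {set A} -> option A -> R :=
  fun _ => wmix 1 None None.

Lemma bs0_strat (R : realType) (A : finType) : bstrat (@bs0 R A).
Proof. by move=> T; apply: wmix_mixed; rewrite ?ler01 ?lexx. Qed.

Lemma bvalue1_ge (R : realType) (G : DDG R) M t1 t2 s1 (c : dd_S R G -> R) :
  ddg_wf G -> (forall i a b, 0 <= M i a b <= 1) -> bstrat s1 ->
  (forall s b, c s <= \sum_a s1 (t1 s) a * bpay M ag1 (t1 s) (t2 s) a b) ->
  \sum_s dd_P R G s * c s <= @bvalue1 R G M t1 t2.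
Proof.
move=> wf HM H1 Hc.
have -> : @bvalue1 R G M t1 t2 = mm (@bstrat R (dd_A R G)) (@bstrat R (dd_A R G)) (fun s1 s2 => bexp M ag1 t1 t2 s1 s2) by [].
apply: (@mm_ge R _ _ (@bstrat R (dd_A R G)) (@bstrat R (dd_A R G)) (fun s1 s2 => bexp M ag1 t1 t2 s1 s2) s1) => //.
- by exists (@bs0 R _); exact: bs0_strat.
- by move=> x y Hx Hy; exact: bexp01.
move=> s2 H2; rewrite bexp_payoff; apply: ler_sum => s _; apply: ler_wpM2l.
  by case: wf.
rewrite payoffE1; apply: (avg_ge (H2 (t2 s))) => b _; exact: Hc.
Qed.

Lemma bvalue1_le (R : realType) (G : DDG R) M t1 t2 s2 (c : dd_S R G -> R) :
  ddg_wf G -> (forall i a b, 0 <= M i a b <= 1) -> bstrat s2 ->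
  (forall s a, \sum_b s2 (t2 s) b * bpay M ag1 (t1 s) (t2 s) a b <= c s) ->
  @bvalue1 R G M t1 t2 <= \sum_s dd_P R G s * c s.
Proof.
move=> wf HM H2 Hc.
have -> : @bvalue1 R G M t1 t2 = mm (@bstrat R (dd_A R G)) (@bstrat R (dd_A R G)) (fun s1 s2 => bexp M ag1 t1 t2 s1 s2) by [].
apply: (@mm_le R _ _ (@bstrat R (dd_A R G)) (@bstrat R (dd_A R G)) (fun s1 s2 => bexp M ag1 t1 t2 s1 s2) s2) => //.
- by exists (@bs0 R _); exact: bs0_strat.
- by move=> x y Hx Hy; exact: bexp01.
move=> s1 H1; rewrite bexp_payoff; apply: ler_sum => s _; apply: ler_wpM2l.
  by case: wf.
rewrite payoffE2; apply: (avg_le (H1 (t1 s))) => a _; exact: Hc.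
Qed.

Lemma bvalue2_ge (R : realType) (G : DDG R) M t1 t2 s2 (c : dd_S R G -> R) :
  ddg_wf G -> (forall i a b, 0 <= M i a b <= 1) -> bstrat s2 ->
  (forall s a, c s <= \sum_b s2 (t2 s) b * bpay M ag2 (t1 s) (t2 s) a b) ->
  \sum_s dd_P R G s * c s <= @bvalue2 R G M t1 t2.
Proof.
move=> wf HM H2 Hc.
have -> : @bvalue2 R G M t1 t2 = mm (@bstrat R (dd_A R G)) (@bstrat R (dd_A R G)) (fun s2 s1 => bexp M ag2 t1 t2 s1 s2) by [].
apply: (@mm_ge R _ _ (@bstrat R (dd_A R G)) (@bstrat R (dd_A R G)) (fun s2 s1 => bexp M ag2 t1 t2 s1 s2) s2) => //.
- by exists (@bs0 R _); exact: bs0_strat.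
- by move=> x y Hx Hy; exact: bexp01.
move=> s1 H1; rewrite bexp_payoff; apply: ler_sum => s _; apply: ler_wpM2l.
  by case: wf.
rewrite payoffE2; apply: (avg_ge (H1 (t1 s))) => a _; exact: Hc.
Qed.

Lemma bvalue2_le (R : realType) (G : DDG R) M t1 t2 s1 (c : dd_S R G -> R) :
  ddg_wf G -> (forall i a b, 0 <= M i a b <= 1) -> bstrat s1 ->
  (forall s b, \sum_a s1 (t1 s) a * bpay M ag2 (t1 s) (t2 s) a b <= c s) ->
  @bvalue2 R G M t1 t2 <= \sum_s dd_P R G s * c s.
Proof.
move=> wf HM H1 Hc.
have -> : @bvalue2 R G M t1 t2 = mm (@bstrat R (dd_A R G)) (@bstrat R (dd_A R G)) (fun s2 s1 => bexp M ag2 t1 t2 s1 s2) by [].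
apply: (@mm_le R _ _ (@bstrat R (dd_A R G)) (@bstrat R (dd_A R G)) (fun s2 s1 => bexp M ag2 t1 t2 s1 s2) s1) => //.
- by exists (@bs0 R _); exact: bs0_strat.
- by move=> x y Hx Hy; exact: bexp01.
move=> s2 H2; rewrite bexp_payoff; apply: ler_sum => s _; apply: ler_wpM2l.
  by case: wf.
rewrite payoffE1; apply: (avg_le (H2 (t2 s))) => b _; exact: Hc.
Qed.

Lemma bpay_sum1 (R : realType) (A : finType) (M : 'I_2 -> option A -> option A -> R)
  i T1 T2 x b :
  mixed (avail T1) x ->
  \sum_a x a * bpay M i T1 T2 a b =
  if avail T2 b then \sum_a x a * M i a b else (if i == ag1 then 1 else 0).
Proof.
move=> Hx; have [_ [x1 xX]] := Hx.
have E : forall a, x a * bpay M i T1 T2 a b =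
    x a * (if avail T2 b then M i a b else (if i == ag1 then 1 else 0)).
  move=> a; case Ha: (avail T1 a); first by rewrite /bpay Ha.
  by rewrite xX ?Ha // !mul0r.
rewrite (eq_bigr _ (fun a _ => E a)); case: (avail T2 b) => //.
by rewrite -mulr_suml x1 mul1r.
Qed.

Lemma bpay_sum2 (R : realType) (A : finType) (M : 'I_2 -> option A -> option A -> R)
  i T1 T2 y a :
  mixed (avail T2) y ->
  \sum_b y b * bpay M i T1 T2 a b =
  if avail T1 a then \sum_b y b * M i a b else (if i == ag1 then 0 else 1).
Proof.
move=> Hy; have [_ [y1 yY]] := Hy.
have E : forall b, y b * bpay M i T1 T2 a b =
    y b * (if avail T1 a then M i a b else (if i == ag1 then 0 else 1)).
  move=> b; case Hb: (avail T2 b); last by rewrite yY ?Hb // !mul0r.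
  by rewrite /bpay Hb; case: (avail T1 a).
rewrite (eq_bigr _ (fun b _ => E b)); case: (avail T1 a) => //.
by rewrite -mulr_suml y1 mul1r.
Qed.

Lemma foldr_maxn_le (s : seq nat) k : all (fun n => n <= k)%N s -> (foldr maxn 0%N s <= k)%N.
Proof. by elim: s => //= n s IH /andP[h1 h2]; rewrite geq_max h1 IH. Qed.

Lemma colmin_le2 (T : Type) (B : T -> T -> bool) a1 a2 cs : (colmin B a1 a2 cs <= 2)%N.
Proof. rewrite /colmin; elim: cs => //= c cs IH; exact: leq_trans (geq_minr _ _) IH. Qed.

Lemma Kval_le2 (T : Type) (B : T -> T -> bool) rs cs : (Kval B rs cs <= 2)%N.
Proof.
apply: foldr_maxn_le; rewrite all_map.
elim: [seq _ | _ <- _, _ <- _] => //= p s ->; by rewrite colmin_le2.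
Qed.

Lemma mixedT (R : realType) (T : finType) (X : pred T) (x : T -> R) :
  mixed X x -> mixed predT x.
Proof. by case=> h1 [h2 _]; split => //; split. Qed.

Definition selCl (T : {set bool}) : option bool :=
  if true \in T then (if false \in T then None else Some false) else Some true.
Definition selCw (T : {set bool}) : option bool :=
  if true \in T then (if false \in T then Some false else Some true) else None.

Lemma selCl_ok s : selCl (Clg s) = s.
Proof. by case: s => [[]|]; rewrite /selCl /= !inE. Qed.
Lemma selCw_ok s : selCw (Cwg s) = s.
Proof. by case: s => [[]|]; rewrite /selCw /= !inE. Qed.

Definition K1s (B : option bool -> option bool -> bool) (s : option bool) : nat :=
  match s with
  | None => Kval B rowsA rowsD
  | Some true => Kval B rowsb rowsa
  | Some false => Kval B rowsa rowsA
  end.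

Lemma lists_ok s :
  [/\ all (avail (Clg s)) (match s with None => rowsA | Some true => rowsb | Some false => rowsa end),
      (forall c, avail (Cwg s) c -> c \in (match s with None => rowsD | Some true => rowsa | Some false => rowsA end)),
      (forall c, avail (Clg s) c -> c \in (match s with None => rowsA | Some true => rowsb | Some false => rowsa end)),
      all (avail (Cwg s)) (match s with None => rowsD | Some true => rowsa | Some false => rowsA end) &
      (match s with None => rowsA | Some true => rowsb | Some false => rowsa end) != [::]].
Proof.
by case: s => [[]|]; split; rewrite /rowsA /rowsD /rowsa /rowsb /= ?inE //;
  case=> [[]|]; rewrite /= ?inE.
Qed.

Lemma det_perr (R : realType) (M : 'I_2 -> option bool -> option bool -> R) :
  is_det_policy M -> 1/2 <= @piddg_error R (Gd R) M.
Proof.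
move=> Hd; have [H1 H2] := det_bits Hd.
have HM : forall i a b, 0 <= M i a b <= 1 by case: Hd => -[].
set Bm := fun r c => M ag1 r c == 1.
set Bt := fun b a => ~~ Bm a b.
have H2' : forall b a, (fun b a => M ag2 a b) b a = (Bt b a)%:R by move=> b a; exact: H2.
have hx : forall s, exists x, mixed (avail (Clg s)) x /\
    forall c, avail (Cwg s) c -> (K1s Bm s)%:R / 2 <= \sum_a x a * M ag1 a c.
  move=> s; have [h1 h2 _ _ h5] := lists_ok s.
  by case: s h1 h2 h5 => [[]|] h1 h2 h5; apply: K_strat.
have hy : forall s, exists y, mixed (avail (Clg s)) y /\
    forall a, avail (Cwg s) a -> (K1s Bt s)%:R / 2 <= \sum_b y b * M ag2 a b.
  move=> s; have [h1 h2 _ _ h5] := lists_ok s.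
  by case: s h1 h2 h5 => [[]|] h1 h2 h5; apply: (K_strat H2').
have [xf Hxf] := boolp.choice hx.
have [yf Hyf] := boolp.choice hy.
have V1 : \sum_s dd_P R (Gd R) s * ((K1s Bm s)%:R / 2) <= @bvalue1 R (Gd R) M (dd_Cl R (Gd R)) (dd_Cw R (Gd R)).
  apply: (@bvalue1_ge R (Gd R) M (dd_Cl R (Gd R)) (dd_Cw R (Gd R)) (fun T => xf (selCl T)) (fun s => (K1s Bm s)%:R / 2)).
  - exact: Gd_wf.
  - exact: HM.
  - by move=> T; apply: mixedT (proj1 (Hxf (selCl T))).
  move=> s b /=; rewrite selCl_ok (bpay_sum1 _ _ _ _ (proj1 (Hxf s))) eqxx.
  case Hb: (avail (Cwg s) b); first exact: (proj2 (Hxf s)).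
  suff h : forall n : nat, (n <= 2)%N -> (n%:R : R) / 2 <= 1.
    by case: s {Hb} => [[]|]; apply: h; exact: Kval_le2.
  by move=> n; rewrite -(ler_nat R) => h'; lra.
have V2 : \sum_s dd_P R (Gd R) s * ((K1s Bt s)%:R / 2) <= @bvalue2 R (Gd R) M (dd_Cw R (Gd R)) (dd_Cl R (Gd R)).
  apply: (@bvalue2_ge R (Gd R) M (dd_Cw R (Gd R)) (dd_Cl R (Gd R)) (fun T => yf (selCl T)) (fun s => (K1s Bt s)%:R / 2)).
  - exact: Gd_wf.
  - exact: HM.
  - by move=> T; apply: mixedT (proj1 (Hyf (selCl T))).
  move=> s a /=; rewrite selCl_ok (bpay_sum2 _ _ _ _ (proj1 (Hyf s))) ag21.
  case Ha: (avail (Cwg s) a); first exact: (proj2 (Hyf s)).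
  suff h : forall n : nat, (n <= 2)%N -> (n%:R : R) / 2 <= 1.
    by case: s {Ha} => [[]|]; apply: h; exact: Kval_le2.
  by move=> n; rewrite -(ler_nat R) => h'; lra.
rewrite /piddg_error.
move: V1 V2; rewrite !sum_opt /=.
have K := Ksum_ge Bm; rewrite /Ksum -(ler_nat R) !natrD in K.
move: K.
move: (bvalue1 _ _ _) (bvalue2 _ _ _).
move: ((Kval _ _ _)%:R : R) ((Kval _ _ _)%:R : R) ((Kval _ _ _)%:R : R).
move: ((Kval _ _ _)%:R : R) ((Kval _ _ _)%:R : R) ((Kval _ _ _)%:R : R).
move=> *; lra.
Qed.

Definition ysel (R : realType) (s : option bool) : option bool -> R :=
  match s with
  | Some false => wmix 1 (Some true) (Some true)
  | _ => wmix 1 None None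
  end.
Definition xsel (R : realType) (s : option bool) : option bool -> R :=
  match s with
  | None => wmix 1 None None
  | Some true => wmix 1 (Some true) (Some true)
  | Some false => wmix (2/3) (Some true) (Some false)
  end.

Lemma ysel_mixed (R : realType) s : mixed (avail (Cwg s)) (ysel R s).
Proof. by case: s => [[]|]; apply: wmix_mixed; rewrite /= ?inE ?ler01 ?lexx. Qed.

Lemma xsel_mixed (R : realType) s : mixed (avail (Cwg s)) (xsel R s).
Proof.
case: s => [[]|]; apply: wmix_mixed; rewrite /= ?inE ?ler01 ?lexx //.
by apply/andP; split; lra.
Qed.

Lemma Mr_perr (R : realType) : @piddg_error R (Gd R) (Mr R) <= 29/60.
Proof.
have V1 : @bvalue1 R (Gd R) (Mr R) (dd_Cl R (Gd R)) (dd_Cw R (Gd R)) <=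
    \sum_s dd_P R (Gd R) s * (match s with None => 1/2 | _ => 0 end).
  apply: (@bvalue1_le R (Gd R) (Mr R) (dd_Cl R (Gd R)) (dd_Cw R (Gd R))
    (fun T => ysel R (selCw T))).
  - exact: Gd_wf.
  - exact: Mr01.
  - by move=> T; apply: mixedT (ysel_mixed R (selCw T)).
  move=> s a /=; rewrite selCw_ok (bpay_sum2 _ _ _ _ (ysel_mixed R s)) eqxx.
  case: s => [[]|]; case: a => [[]|]; rewrite /= ?inE /= ?wmix_sum /Mr /= ?eqxx; lra.
have V2 : @bvalue2 R (Gd R) (Mr R) (dd_Cw R (Gd R)) (dd_Cl R (Gd R)) <=
    \sum_s dd_P R (Gd R) s *
      (match s with None => 1 | Some true => 1/2 | Some false => 2/3 end).
  apply: (@bvalue2_le R (Gd R) (Mr R) (dd_Cw R (Gd R)) (dd_Cl R (Gd R))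
    (fun T => xsel R (selCw T))).
  - exact: Gd_wf.
  - exact: Mr01.
  - by move=> T; apply: mixedT (xsel_mixed R (selCw T)).
  move=> s b /=; rewrite selCw_ok (bpay_sum1 _ _ _ _ (xsel_mixed R s)) ag21.
  case: s => [[]|]; case: b => [[]|]; rewrite /= ?inE /= ?wmix_sum /Mr /= ?ag21; lra.
rewrite /piddg_error; move: V1 V2; rewrite !sum_opt /=.
move: (bvalue1 _ _ _) (bvalue2 _ _ _) => *; lra.
Qed.

Lemma Gd_helps_ck (R : realType) : randomization_helps (@ckddg_error R (Gd R)).
Proof.
exists (Mr R); split; first exact: Mr_policy.
move=> M' HM'; apply: (le_lt_trans (Mr_err R)); apply: (lt_le_trans _ (det_err HM')); lra.
Qed.

Lemma Gd_helps_pi (R : realType) : randomization_helps (@piddg_error R (Gd R)).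
Proof.
exists (Mr R); split; first exact: Mr_policy.
move=> M' HM'; apply: (le_lt_trans (Mr_perr R)); apply: (lt_le_trans _ (det_perr HM')); lra.
Qed.

Lemma induced_wf (R : realType) (G : DDG R) : ddg_wf G -> ckdg_wf (induced_ckdg G).
Proof.
move=> [P0 P1]; split.
  by move=> p /=; apply: divr_ge0 => //; rewrite ler0n.
have E (F : ('I_2 * dd_S R G)%type -> R) : \sum_p F p = \sum_i \sum_s F (i, s).
  by rewrite pair_bigA; apply: eq_bigr => -[].
rewrite /= E sum_I2 -!mulr_suml P1; lra.
Qed.

Theorem proposition3p6 (R : realType) :
  (exists G : CKDG R, ckdg_wf G /\ randomization_helps (@ckdg_error R G)) /\
  (exists G : DDG R, ddg_wf G /\ randomization_helps (@ckddg_error R G)) /\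
  (exists G : DDG R, ddg_wf G /\ randomization_helps (@piddg_error R G)).
Proof.
split; last split.
- exists (induced_ckdg (Gd R)); split; first exact: induced_wf (Gd_wf R).
  exact: Gd_helps_ck.
- by exists (Gd R); split; [exact: Gd_wf | exact: Gd_helps_ck].
- by exists (Gd R); split; [exact: Gd_wf | exact: Gd_helps_pi].
Qed.
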